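(* Under the hypotheses below (for SGDA or SEG), for all $x^*\in X^*$ there exist constants $c_1\in(0,1)$, $c_2\in(0,\infty)$ such that, with $V(x,x^* )=\|x-x^*\|^2+1$ (a function $\mathbb{R}^d\to[1,\infty)$), $$\mathbb{E}\big[V(X_{t+1},x^* )\mid\mathcal{F}_t\big]\le c_1 V(X_t,x^* )+c_2\quad\text{for all }t\ge0.$$ Hypotheses: $F:\mathbb{R}^d\to\mathbb{R}^d$, $X^*=\{x:F(x)=0\}$ nonempty with some $x^*\in X^*$, $\|x^*\|\le R$; there are $\lambda\ge0,\mu>0$ with $\langle F(x),x-x^*\rangle\ge\mu\|x-x^*\|^2-\lambda$ for all $x$ and some $x^*\in X^*$; the stochastic oracle assumptions of the context hold; and either (i) SGDA $X_{t+1}=X_t-\gamma(F(X_t)+U_t(X_t))$ with $\|F(x)\|\le G(1+\|x\|)$ for all $x$ and $0<\gamma<\mu/G^2$, or (ii) SEG $X_{t+1/2}=X_t-\gamma(F(X_t)+U_t(X_t))$, $X_{t+1}=X_t-\alpha\gamma(F(X_{t+1/2})+U_{t+1/2}(X_{t+1/2}))$ with $F$ $L$-Lipschitz, $0<\gamma<\frac1{2\mu+\sqrt3 L}$, $\alpha\in(0,1)$.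
   Context: Stochastic oracle: the noise fields $(U_t(\cdot))$ (and $U_{t+1/2}$ for SEG) are i.i.d. random fields; there is a filtration $(\mathcal{F}_t)$ (history of the iterates, $\mathcal{F}_{t+1/2}=\mathcal{F}_t$) with $U_t(X_t)$ $\mathcal{F}_{t+1}$-measurable but not $\mathcal{F}_t$-measurable, $\mathbb{E}[U_t(x)\mid\mathcal{F}_t]=0$ and $\mathbb{E}[\|U_t(x)\|^2\mid\mathcal{F}_t]\le\sigma^2$ for all $x$, for some $\sigma>0$. *)

(* Defs.v *)
From HB Require Import structures.
From mathcomp Require Import all_boot all_order all_algebra.
From mathcomp Require Import all_classical all_reals all_analysis.
Set Implicit Arguments. Unset Strict Implicit. Unset Printing Implicit Defensive.
Import Order.TTheory GRing.Theory Num.Theory.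
Import numFieldNormedType.Exports.
Local Open Scope classical_set_scope.
Local Open Scope ring_scope.

(** Vectors of R^d are row vectors 'rV[R]_d; Euclidean inner product and norm
    (the library's norm on matrices is the sup norm, so we define ours). *)
Definition dotv {R : realType} {d : nat} (u v : 'rV[R]_d) : R :=
  \sum_(i < d) u ord0 i * v ord0 i.
Definition enorm {R : realType} {d : nat} (u : 'rV[R]_d) : R :=
  Num.sqrt (dotv u u).

Definition Vfun {R : realType} {d : nat} (x xs : 'rV[R]_d) : R :=
  enorm (x - xs) ^+ 2 + 1.

Definition borelV (R : realType) (d : nat) : set (set 'rV[R]_d) :=
  smallest (sigma_algebra setT) [set A | open A].

Definition borel_fun {R : realType} {d : nat} (F : 'rV[R]_d -> 'rV[R]_d) :=
  forall B : set 'rV[R]_d, borelV B -> borelV (F @^-1` B).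

Definition sub_sigma {dT : measure_display} {T : measurableType dT}
  (G : set (set T)) := sigma_algebra setT G /\ G `<=` measurable.

Definition filtration {dT : measure_display} {T : measurableType dT}
  (Fl : nat -> set (set T)) :=
  (forall t, sub_sigma (Fl t)) /\ (forall t, Fl t `<=` Fl t.+1).

Definition meas_wrt {dT : measure_display} {T : measurableType dT}
  {R : realType} {d : nat} (G : set (set T)) (Y : T -> 'rV[R]_d) :=
  forall B : set 'rV[R]_d, borelV B -> G (Y @^-1` B).

(** Stochastic oracle assumptions for a noise field U : T -> R^d -> R^d
    (omega |-> U(omega, .)) relative to the sigma-algebra G (the "past")
    and Gnext (the next filtration element):
    for every G-measurable random point Y,
    - omega |-> U(omega, Y omega) is Gnext-measurable,
    - E[U(Y) | G] = 0 (integrable, and its integral over every A in G vanishes,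
      coordinatewise),
    - E[ ||U(Y)||^2 | G ] <= sigma^2 (integral characterization). *)
Definition oracle {dT : measure_display} {T : measurableType dT}
  {R : realType} {d : nat} (P : probability T R)
  (G Gnext : set (set T)) (sigma : R) (U : T -> 'rV[R]_d -> 'rV[R]_d) :=
  forall Y : T -> 'rV[R]_d, meas_wrt G Y ->
    [/\ meas_wrt Gnext (fun w => U w (Y w)),
        (forall i, P.-integrable setT (fun w => ((U w (Y w)) ord0 i)%:E)),
        (forall A, G A -> forall i,
            (\int[P]_(w in A) ((U w (Y w)) ord0 i)%:E = 0)%E) &
        (forall A, G A ->
            (\int[P]_(w in A) ((enorm (U w (Y w))) ^+ 2)%:E
               <= (sigma ^+ 2)%:E * P A)%E)].

(** Conditional-expectation inequality  E[Z | G] <= W  for nonnegative Z and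
    G-measurable nonnegative W, in its integral characterization:
    for all A in G,  int_A Z dP <= int_A W dP. *)
Definition cond_le {dT : measure_display} {T : measurableType dT}
  {R : realType} (P : probability T R) (G : set (set T)) (Z W : T -> R) :=
  forall A, G A -> (\int[P]_(w in A) (Z w)%:E <= \int[P]_(w in A) (W w)%:E)%E.

(* Main.v *)
Require Import Defs.
From HB Require Import structures.
From mathcomp Require Import all_boot all_order all_algebra.
From mathcomp Require Import all_classical all_reals all_analysis.
From mathcomp Require Import measurable_realfun.
Import Order.TTheory GRing.Theory Num.Theory.
Import numFieldNormedType.Exports.
Local Open Scope classical_set_scope.
Local Open Scope ring_scope.
Set Implicit Arguments. Unset Strict Implicit. Unset Printing Implicit Defensive.
From mathcomp Require Import ring lra.
Section Alg.
Variables (R : realType) (d : nat).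
Implicit Types (u v w : 'rV[R]_d).

Lemma dotvC u v : dotv u v = dotv v u.
Proof. by apply: eq_bigr => i _; rewrite mulrC. Qed.
Lemma dotvDl u v w : dotv (u + v) w = dotv u w + dotv v w.
Proof. by rewrite /dotv -big_split; apply: eq_bigr => i _; rewrite mxE mulrDl. Qed.
Lemma dotvZl (a : R) u v : dotv (a *: u) v = a * dotv u v.
Proof. by rewrite /dotv mulr_sumr; apply: eq_bigr => i _; rewrite mxE mulrA. Qed.
Lemma dotvNl u v : dotv (- u) v = - dotv u v.
Proof. by rewrite -scaleN1r dotvZl mulN1r. Qed.
Lemma dotvDr u v w : dotv w (u + v) = dotv w u + dotv w v.
Proof. by rewrite dotvC dotvDl !(dotvC w). Qed.
Lemma dotvZr (a : R) u v : dotv v (a *: u) = a * dotv v u.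
Proof. by rewrite dotvC dotvZl dotvC. Qed.
Lemma dotvNr u v : dotv v (- u) = - dotv v u.
Proof. by rewrite dotvC dotvNl dotvC. Qed.
Lemma dotv_ge0 u : 0 <= dotv u u.
Proof. by apply: sumr_ge0 => i _; by rewrite -expr2 sqr_ge0. Qed.
Lemma enorm2 u : enorm u ^+ 2 = dotv u u.
Proof. by rewrite /enorm sqr_sqrtr // dotv_ge0. Qed.
Lemma enorm_ge0 u : 0 <= enorm u.
Proof. exact: sqrtr_ge0. Qed.

Lemma n2D u v : dotv (u + v) (u + v) = dotv u u + 2 * dotv u v + dotv v v.
Proof. rewrite !dotvDl !dotvDr (dotvC v u); lra. Qed.
Lemma n2B u v : dotv (u - v) (u - v) = dotv u u - 2 * dotv u v + dotv v v.
Proof. rewrite n2D dotvNr dotvNl dotvNr opprK; lra. Qed.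
Lemma n2Z (a : R) u : dotv (a *: u) (a *: u) = a ^+ 2 * dotv u u.
Proof. rewrite dotvZl dotvZr; lra. Qed.
Lemma n2N u : dotv (- u) (- u) = dotv u u.
Proof. by rewrite dotvNl dotvNr opprK. Qed.

Lemma n2D_le (e : R) u v : 0 < e ->
  dotv (u + v) (u + v) <= (1 + e) * dotv u u + (1 + e^-1) * dotv v v.
Proof.
move=> e0; rewrite n2D.
have H := dotv_ge0 (e *: u - v); rewrite n2B n2Z dotvZl in H.
have ei : e * e^-1 = 1 by rewrite mulfV // gt_eqF.
have := dotv_ge0 u; have := dotv_ge0 v => h1 h2.
set a := dotv u u in H h2 *; set b := dotv v v in H h1 *; set c := dotv u v in H *.
set ie := e^-1 in ei *.
have ie0 : 0 < ie by rewrite invr_gt0.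
suff : e * (a + 2 * c + b) <= e * ((1 + e) * a + (1 + ie) * b).
  by rewrite ler_pM2l.
have -> : e * ((1 + e) * a + (1 + ie) * b) = e * a + e * e * a + e * b + (e * ie) * b by ring.
rewrite ei; nra.
Qed.

Lemma n2D_le2 u v : dotv (u + v) (u + v) <= 2 * dotv u u + 2 * dotv v v.
Proof. by have := @n2D_le 1 u v ltr01; rewrite invr1. Qed.
End Alg.

Lemma det_sgda (R : realType) d (F : 'rV[R]_d -> 'rV[R]_d) (x0 : 'rV[R]_d)
  (lam mu Gc gamma : R) : 0 <= lam -> 0 < mu ->
  (forall x, dotv (F x) (x - x0) >= mu * enorm (x - x0) ^+ 2 - lam) ->
  (forall x, enorm (F x) <= Gc * (1 + enorm x)) ->
  0 < gamma -> gamma < mu / Gc ^+ 2 ->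
  exists q C, [/\ 0 < q, q < 1, 0 <= C & forall x,
    dotv (x - gamma *: F x - x0) (x - gamma *: F x - x0)
      <= q * dotv (x - x0) (x - x0) + C].
Proof.
move=> l0 m0 Hco HG g0 gmu.
have G0 : Gc != 0.
  apply/negP => /eqP G0; move: gmu; rewrite G0 expr0n /= invr0 mulr0.
  by move/(lt_trans g0); rewrite ltxx.
have G2 : 0 < Gc ^+ 2 by rewrite exprn_even_gt0.
have gG : gamma * Gc ^+ 2 < mu by rewrite -ltr_pdivlMr.
pose q0 := 1 - 2 * gamma * mu + 25/16 * gamma ^+ 2 * Gc ^+ 2.
have q0lt : q0 < 1.
  rewrite /q0; have : 0 < gamma * (mu - 25/32 * (gamma * Gc ^+ 2)) by
    apply: mulr_gt0 => //; nra.
  nra.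
exists (Num.max q0 (1/2)), (2 * gamma * lam + gamma ^+ 2 * Gc ^+ 2 * (25/4 * dotv x0 x0 + 5)).
split.
- by rewrite lt_max; apply/orP; right; lra.
- by rewrite gt_max; apply/andP; split => //; lra.
- apply: addr_ge0; first by apply: mulr_ge0 => //; apply: mulr_ge0 => //; lra.
  apply: mulr_ge0; first by apply: mulr_ge0; rewrite sqr_ge0.
  have := dotv_ge0 x0; lra.
move=> x.
have -> : x - gamma *: F x - x0 = (x - x0) - gamma *: F x by rewrite addrAC.
rewrite (n2B (x - x0) (gamma *: F x)) dotvZr n2Z.
set nD := dotv (x - x0) (x - x0).
have nD0 : 0 <= nD by exact: dotv_ge0.
have h1 : mu * nD - lam <= dotv (x - x0) (F x) by have := Hco x; rewrite enorm2 dotvC.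
have hr : enorm (F x) ^+ 2 <= (Gc * (1 + enorm x)) ^+ 2.
  by rewrite !expr2; apply: ler_pM; rewrite ?enorm_ge0 ?HG.
have hx : dotv x x <= (1 + 4^-1) * nD + (1 + 4^-1^-1) * dotv x0 x0.
  by have := @n2D_le _ _ 4^-1 (x - x0) x0; rewrite subrK; apply; rewrite invr_gt0.
rewrite invrK in hx.
have hr2 : (1 + enorm x) ^+ 2 <= 5/4 * dotv x x + 5.
  rewrite -enorm2; have := sqr_ge0 (enorm x / 2 - 2); rewrite !expr2; nra.
have h2 : dotv (F x) (F x) <= Gc ^+ 2 * (25/16 * nD + 25/4 * dotv x0 x0 + 5).
  rewrite -enorm2; apply: (le_trans hr); rewrite exprMn; apply: ler_wpM2l; first by rewrite sqr_ge0.
  lra.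
have h1' : 2 * gamma * (mu * nD - lam) <= 2 * gamma * dotv (x - x0) (F x).
  by rewrite ler_pM2l //; lra.
have h2' : gamma ^+ 2 * dotv (F x) (F x) <= gamma ^+ 2 * (Gc ^+ 2 * (25/16 * nD + 25/4 * dotv x0 x0 + 5)).
  by apply: ler_wpM2l => //; rewrite sqr_ge0.
have h3 : q0 * nD <= Num.max q0 (1/2) * nD by apply: ler_wpM2r => //; rewrite le_max lexx.
rewrite /q0 in h3.
lra.
Qed.

Lemma det_seg (R : realType) d (F : 'rV[R]_d -> 'rV[R]_d) (x0 : 'rV[R]_d)
  (lam mu L gamma alpha : R) : 0 <= lam -> 0 < mu ->
  (forall x, dotv (F x) (x - x0) >= mu * enorm (x - x0) ^+ 2 - lam) ->
  0 <= L -> (forall x y, enorm (F x - F y) <= L * enorm (x - y)) ->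
  0 < gamma -> gamma < 1 / (2 * mu + Num.sqrt 3 * L) -> 0 < alpha -> alpha < 1 ->
  exists q C, [/\ 0 < q, q < 1, 0 <= C & forall x,
    dotv (x - (alpha * gamma) *: F (x - gamma *: F x) - x0)
         (x - (alpha * gamma) *: F (x - gamma *: F x) - x0)
      <= q * dotv (x - x0) (x - x0) + C].
Proof.
move=> l0 m0 Hco L0 HL g0 gden a0 a1.
have s30 : 0 <= Num.sqrt (3 : R) by exact: sqrtr_ge0.
have s32 : Num.sqrt (3 : R) ^+ 2 = 3 by rewrite sqr_sqrtr.
have den0 : 0 < 2 * mu + Num.sqrt 3 * L.
  by have := mulr_ge0 s30 L0; lra.
have gd : gamma * (2 * mu + Num.sqrt 3 * L) < 1 by rewrite -ltr_pdivlMr.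
have sLg : Num.sqrt 3 * L * gamma < 1 by nra.
have sLg0 : 0 <= Num.sqrt 3 * L * gamma by apply: mulr_ge0; [apply: mulr_ge0|lra].
have L3 : 3 * (L ^+ 2 * gamma ^+ 2) <= 1.
  have : (Num.sqrt 3 * L * gamma) ^+ 2 <= 1 by rewrite expr2; nra.
  by rewrite !exprMn s32 mulrA.
have [c [c0 [cA ca]]] : exists c : R, 0 < c /\ c <= alpha * gamma * mu /\ c <= alpha / 3.
  have gm0 : 0 < 1 + 3 * gamma * mu by nra.
  exists (alpha * gamma * mu / (1 + 3 * gamma * mu)); split; last split.
  - by apply: divr_gt0 => //; do 2 apply: mulr_gt0 => //.
  - have gm : 0 <= gamma * mu by apply: mulr_ge0; lra.
    have P1 : 0 < alpha * gamma * mu by do 2 apply: mulr_gt0 => //.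
    rewrite ler_pdivrMr // mulrDr mulr1 lerDl; apply: mulr_ge0; [exact: ltW | lra].
  - rewrite ler_pdivrMr //.
    have -> : alpha / 3 * (1 + 3 * gamma * mu) = alpha / 3 + alpha * gamma * mu by field.
    lra.
exists (1 - c), (2 * (alpha * gamma) * lam); split.
- lra.
- lra.
- by apply: mulr_ge0 => //; nra.
move=> x.
set u := F x; set xh := x - gamma *: u; set v := F xh.
have -> : x - (alpha * gamma) *: v - x0 = (x - x0) - (alpha * gamma) *: v by rewrite addrAC.
rewrite (n2B (x - x0) ((alpha * gamma) *: v)) dotvZr n2Z.
have eD : x - x0 = (xh - x0) + gamma *: u by rewrite /xh addrAC subrK.
have hD : dotv (x - x0) v = dotv v (xh - x0) + gamma * dotv u v.
  by rewrite {1}eD dotvDl dotvZl dotvC.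
have h1 : mu * dotv (xh - x0) (xh - x0) - lam <= dotv v (xh - x0).
  by have := Hco xh; rewrite enorm2.
have hvu : dotv (v - u) (v - u) = dotv v v - 2 * dotv u v + dotv u u.
  by rewrite (n2B v u) (dotvC v u).
have hxh : xh - x = - (gamma *: u) by rewrite /xh addrAC subrr add0r.
have hL2 : dotv (v - u) (v - u) <= L ^+ 2 * (gamma ^+ 2 * dotv u u).
  rewrite -enorm2 -n2Z -(n2N (gamma *: u)) -hxh -enorm2 -exprMn.
  by rewrite !expr2; apply: ler_pM; rewrite ?enorm_ge0 ?HL.
have hD2 : dotv (x - x0) (x - x0) <= 2 * dotv (xh - x0) (xh - x0) + 2 * (gamma ^+ 2 * dotv u u).
  by rewrite {1 2}eD -n2Z; apply: n2D_le2.
rewrite hD.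
set nD := dotv (x - x0) (x - x0) in hD2 *.
set ny := dotv (xh - x0) (xh - x0) in h1 hD2 *.
set nu := dotv u u in hvu hL2 hD2 *.
set nv := dotv v v in hvu *.
set dyv := dotv v (xh - x0) in h1 *.
set duv := dotv u v in hvu *.
set nvu := dotv (v - u) (v - u) in hvu hL2.
have ny0 : 0 <= ny by exact: dotv_ge0.
have nu0 : 0 <= nu by exact: dotv_ge0.
have nv0 : 0 <= nv by exact: dotv_ge0.
have A0 : 0 < alpha * gamma by apply: mulr_gt0.
have f1 : 2 * (alpha * gamma) * (mu * ny - lam) <= 2 * (alpha * gamma) * dyv.
  by rewrite ler_pM2l //; lra.
have f2 : (alpha * gamma) * gamma * nvu <= (alpha * gamma) * gamma * (L ^+ 2 * (gamma ^+ 2 * nu)).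
  by apply: ler_wpM2l => //; apply: mulr_ge0; lra.
have f4 : (alpha * gamma) * gamma * (L ^+ 2 * (gamma ^+ 2 * nu)) <= (alpha * gamma) * gamma * (1/3 * nu).
  apply: ler_wpM2l; first by apply: mulr_ge0; lra.
  rewrite mulrA; apply: ler_wpM2r => //; lra.
have f3 : (alpha * gamma) ^+ 2 * nv <= (alpha * gamma) * gamma * nv.
  apply: ler_wpM2r => //; rewrite expr2; apply: ler_wpM2l; first lra.
  have : 0 < (1 - alpha) * gamma by apply: mulr_gt0; lra.
  lra.
have f5 : c * nD <= c * (2 * ny + 2 * (gamma ^+ 2 * nu)) by apply: ler_wpM2l; lra.
have f6 : c * (2 * ny) <= (alpha * gamma * mu) * (2 * ny) by apply: ler_wpM2r; lra.
have f7 : c * (2 * (gamma ^+ 2 * nu)) <= alpha / 3 * (2 * (gamma ^+ 2 * nu)).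
  apply: ler_wpM2r => //; apply: mulr_ge0 => //; apply: mulr_ge0 => //; exact: sqr_ge0.
have e7 : alpha / 3 * (2 * (gamma ^+ 2 * nu)) = 2/3 * ((alpha * gamma) * gamma * nu).
  by rewrite expr2; field.
have hvu2 : (alpha * gamma) * gamma * nvu = (alpha * gamma) * gamma * nv - 2 * ((alpha * gamma) * gamma * duv) + (alpha * gamma) * gamma * nu by rewrite hvu; ring.
lra.
Qed.

Lemma shift_lem (R : realType) d (g : 'rV[R]_d -> 'rV[R]_d) (x0 xs : 'rV[R]_d) (q C : R) :
  0 < q -> q < 1 -> 0 <= C ->
  (forall x, dotv (g x - x0) (g x - x0) <= q * dotv (x - x0) (x - x0) + C) ->
  exists q2 C2, [/\ 0 < q2, q2 < 1, 0 <= C2 & forall x,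
    dotv (g x - xs) (g x - xs) <= q2 * dotv (x - xs) (x - xs) + C2].
Proof.
move=> q0 q1 C0 Hg.
pose dl := 1 - q.
have dl0 : 0 < dl by rewrite /dl; lra.
pose s := dl / 8.
have s0 : 0 < s by rewrite /s; lra.
pose K := 1 + s^-1.
have K0 : 0 < K by rewrite /K; apply: addr_gt0; [exact: ltr01 | rewrite invr_gt0].
pose nz := dotv (x0 - xs) (x0 - xs).
have nz0 : 0 <= nz by exact: dotv_ge0.
exists ((1 + s) * ((1 + s) * q)), ((1 + s) * (q * (K * nz) + C) + K * nz); split.
- by apply: mulr_gt0; [lra | apply: mulr_gt0 => //; lra].
- have -> : (1 + s) * ((1 + s) * q) = 1 - 3/4 * dl - 15/64 * dl ^+ 2 - 1/64 * dl ^+ 3.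
    by rewrite /s /dl; field.
  have := exprn_gt0 2 dl0; have := exprn_gt0 3 dl0; lra.
- apply: addr_ge0; last by apply: mulr_ge0; lra.
  apply: mulr_ge0; first lra.
  by apply: addr_ge0 => //; apply: mulr_ge0; [lra | apply: mulr_ge0; lra].
move=> x.
have e1 : g x - xs = (g x - x0) + (x0 - xs) by rewrite addrA subrK.
have e2 : x - x0 = (x - xs) + (xs - x0) by rewrite addrA subrK.
have e3 : dotv (xs - x0) (xs - x0) = nz by rewrite /nz -opprB n2N.
have h1 := @n2D_le _ _ s (g x - x0) (x0 - xs) s0.
have h2 := @n2D_le _ _ s (x - xs) (xs - x0) s0.
rewrite -e1 in h1; rewrite -e2 e3 in h2.
have h3 := Hg x.
set a := dotv (g x - xs) (g x - xs) in h1 *.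
set b := dotv (g x - x0) (g x - x0) in h1 h3.
set c := dotv (x - x0) (x - x0) in h2 h3.
set e := dotv (x - xs) (x - xs) in h2 *.
rewrite -/K in h1 h2; rewrite -/nz in h1.
have h4 : (1 + s) * b <= (1 + s) * (q * c + C) by apply: ler_wpM2l => //; lra.
have h5 : q * c <= q * ((1 + s) * e + K * nz) by apply: ler_wpM2l => //; lra.
have h6 : (1 + s) * (q * c) <= (1 + s) * (q * ((1 + s) * e + K * nz)) by apply: ler_wpM2l => //; lra.
have e7 : (1 + s) * (q * c + C) = (1 + s) * (q * c) + (1 + s) * C by ring.
have e8 : (1 + s) * (q * ((1 + s) * e + K * nz)) = (1 + s) * ((1 + s) * q) * e + (1 + s) * (q * (K * nz)) by ring.
lra.
Qed.
Lemma meas_coord (dT : measure_display) (T : measurableType dT) (R : realType) d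
  (G : set (set T)) (Y : T -> 'rV[R]_d) i :
  G `<=` measurable -> meas_wrt G Y -> measurable_fun setT (fun w => Y w ord0 i).
Proof.
move=> GM HY; apply: (measurability _ (measurable_realfun.RGenOpens.measurableE R)).
move=> _ [_ [a [b ->] <-]]; rewrite setTI; apply: GM.
have -> : (fun w => Y w ord0 i) @^-1` `]a,b[%classic =
   Y @^-1` ((fun M : 'rV[R]_d => M ord0 i) @^-1` `]a,b[%classic) by [].
apply: HY; apply: sub_sigma_algebra.
have /continuousP := @coord_continuous R 1 d ord0 i.
by apply; exact: interval_open.
Qed.

Lemma meas_n2 (dT : measure_display) (T : measurableType dT) (R : realType) d
  (G : set (set T)) (Y : T -> 'rV[R]_d) (c : 'rV[R]_d) :
  G `<=` measurable -> meas_wrt G Y ->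
  measurable_fun setT (fun w => enorm (Y w - c) ^+ 2).
Proof.
move=> GM HY.
have -> : (fun w => enorm (Y w - c) ^+ 2) =
   (fun w => \sum_(i < d) ((Y w ord0 i - c ord0 i) * (Y w ord0 i - c ord0 i))).
  by apply: funext => w; rewrite enorm2 /dotv; apply: eq_bigr => i _; rewrite !mxE.
apply: measurable_sum => i; apply: measurable_funM; apply: measurable_funB;
  [exact: meas_coord HY | exact: measurable_cst | exact: meas_coord HY | exact: measurable_cst].
Qed.

Lemma meas_n2' (dT : measure_display) (T : measurableType dT) (R : realType) d
  (G : set (set T)) (Y : T -> 'rV[R]_d) :
  G `<=` measurable -> meas_wrt G Y ->
  measurable_fun setT (fun w => enorm (Y w) ^+ 2).
Proof.
move=> GM HY; have := meas_n2 0 GM HY.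
by rewrite (_ : (fun w => _) = fun w => enorm (Y w) ^+ 2) //; apply: funext => w; rewrite subr0.
Qed.

Section Integ.
Local Open Scope ereal_scope.
Lemma int_mono_nm (dT : measure_display) (T : measurableType dT) (R : realType)
  (mu : {measure set T -> \bar R}) (D : set T) (f g : T -> \bar R) :
  (forall x, D x -> 0 <= f x) -> (forall x, D x -> f x <= g x) ->
  \int[mu]_(x in D) f x <= \int[mu]_(x in D) g x.
Proof.
move=> f0 fg.
have g0 : forall x, D x -> 0 <= g x by move=> x Dx; exact: le_trans (f0 x Dx) (fg x Dx).
rewrite !ge0_integralE //.
apply: ereal_sup_le => _ [h hf <-]; exists h => //= x.
apply: le_trans (hf x) _.
rewrite /patch; case: ifPn => // xD; apply: fg; by rewrite inE in xD.
Qed.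

Lemma int_comb (dT : measure_display) (T : measurableType dT) (R : realType)
  (P : probability T R) (A : set T) (f h N1 N2 : T -> R) (K1 K2 s2 : R) :
  measurable A -> measurable_fun setT h -> measurable_fun setT N1 ->
  measurable_fun setT N2 ->
  (forall w, 0 <= h w)%R -> (forall w, 0 <= N1 w)%R -> (forall w, 0 <= N2 w)%R ->
  (0 <= K1)%R -> (0 <= K2)%R -> (0 <= s2)%R -> (forall w, 0 <= f w)%R ->
  \int[P]_(w in A) (N1 w)%:E <= s2%:E * P A ->
  \int[P]_(w in A) (N2 w)%:E <= s2%:E * P A ->
  (forall w, f w <= h w + K1 * N1 w + K2 * N2 w)%R ->
  \int[P]_(w in A) (f w)%:E <= \int[P]_(w in A) (h w + (K1 + K2) * s2)%:E.
Proof.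
move=> mA mh mN1 mN2 h0 N10 N20 K10 K20 s20 f0 I1 I2 Hf.
have mh' : measurable_fun A (fun w => (h w)%:E) by apply/measurable_EFinP/measurable_funTS.
have mN1' : measurable_fun A (fun w => (N1 w)%:E) by apply/measurable_EFinP/measurable_funTS.
have mN2' : measurable_fun A (fun w => (N2 w)%:E) by apply/measurable_EFinP/measurable_funTS.
have step : \int[P]_(w in A) (f w)%:E <=
    \int[P]_(w in A) ((h w)%:E + (K1%:E * (N1 w)%:E + K2%:E * (N2 w)%:E)).
  apply: int_mono_nm => w _; first by rewrite lee_fin.
  by rewrite -!EFinM -!EFinD lee_fin addrA.
apply: (le_trans step).
rewrite ge0_integralD //; first last.
- apply: emeasurable_funD; apply: emeasurable_funM => //; exact: measurable_cst.
- move=> w _; apply: adde_ge0; apply: mule_ge0; by rewrite lee_fin.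
- by move=> w _; rewrite lee_fin.
rewrite ge0_integralD //; first last.
- apply: emeasurable_funM => //; exact: measurable_cst.
- by move=> w _; apply: mule_ge0; rewrite lee_fin.
- apply: emeasurable_funM => //; exact: measurable_cst.
- by move=> w _; apply: mule_ge0; rewrite lee_fin.
rewrite ge0_integralZl_EFin //; last by move=> w _; rewrite lee_fin.
rewrite ge0_integralZl_EFin //; last by move=> w _; rewrite lee_fin.
have -> : \int[P]_(w in A) (h w + (K1 + K2) * s2)%:E = \int[P]_(w in A) ((h w)%:E + ((K1 + K2) * s2)%:E) by [].
rewrite ge0_integralD //; first last.
  all: try exact: measurable_cst.
  all: try by move=> w _; rewrite lee_fin //; apply: mulr_ge0 => //; apply: addr_ge0.
rewrite integral_cst //.
apply: leeD2l.
have step2 : K1%:E * \int[P]_(w in A) (N1 w)%:E + K2%:E * \int[P]_(w in A) (N2 w)%:E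
   <= K1%:E * (s2%:E * P A) + K2%:E * (s2%:E * P A).
  by apply: leeD; apply: lee_wpmul2l; rewrite ?lee_fin.
apply: (le_trans step2).
rewrite EFinM EFinD ge0_muleDl ?lee_fin // !muleA ge0_muleDl //; by apply: mule_ge0; rewrite lee_fin.
Qed.
End Integ.

Lemma finish (dT : measure_display) (T : measurableType dT) (R : realType)
  (P : probability T R) d (Fl : nat -> set (set T)) (X : nat -> T -> 'rV[R]_d)
  (xs : 'rV[R]_d) (sigma c0 C0 K1 K2 : R) :
  filtration Fl -> (forall t, meas_wrt (Fl t) (X t)) -> 0 < c0 -> c0 < 1 -> 0 <= C0 ->
  0 <= K1 -> 0 <= K2 ->
  (forall t, exists N1 N2 : T -> R,
     measurable_fun setT N1 /\ measurable_fun setT N2 /\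
     (forall w, 0 <= N1 w) /\ (forall w, 0 <= N2 w) /\
     (forall A, Fl t A -> (\int[P]_(w in A) (N1 w)%:E <= (sigma ^+ 2)%:E * P A)%E) /\
     (forall A, Fl t A -> (\int[P]_(w in A) (N2 w)%:E <= (sigma ^+ 2)%:E * P A)%E) /\
     (forall w, dotv (X t.+1 w - xs) (X t.+1 w - xs) <=
        c0 * dotv (X t w - xs) (X t w - xs) + C0 + K1 * N1 w + K2 * N2 w)) ->
  exists c1 c2 : R, [/\ 0 < c1, c1 < 1, 0 < c2 &
    forall t : nat,
      cond_le P (Fl t) (fun w => Vfun (X t.+1 w) xs)
                       (fun w => c1 * Vfun (X t w) xs + c2)].
Proof.
move=> [HFl1 _] HX c00 c01 C00 K10 K20 H.
have s20 : 0 <= sigma ^+ 2 by exact: sqr_ge0.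
have Ks : 0 <= (K1 + K2) * sigma ^+ 2 by apply: mulr_ge0 => //; lra.
exists c0, (C0 + 1 - c0 + (K1 + K2) * sigma ^+ 2); split => //; first lra.
move=> t A FA.
have [N1 [N2 [mN1 [mN2 [N10 [N20 [I1 [I2 Hpt]]]]]]]] := H t.
have mA : measurable A := (HFl1 t).2 A FA.
have GM : Fl t `<=` measurable := (HFl1 t).2.
have mh : measurable_fun setT (fun w => c0 * Vfun (X t w) xs + (C0 + 1 - c0)).
  apply: measurable_funD; last exact: measurable_cst.
  apply: measurable_funM; first exact: measurable_cst.
  apply: measurable_funD; last exact: measurable_cst.
  exact: meas_n2 GM (HX t).
have h0 : forall w, 0 <= c0 * Vfun (X t w) xs + (C0 + 1 - c0).
  move=> w; apply: addr_ge0; last lra.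
  apply: mulr_ge0; first lra.
  rewrite /Vfun; apply: addr_ge0 => //; exact: sqr_ge0.
have f0 : forall w, 0 <= Vfun (X t.+1 w) xs.
  move=> w; rewrite /Vfun; apply: addr_ge0 => //; exact: sqr_ge0.
have Hpt' : forall w, Vfun (X t.+1 w) xs <=
    (c0 * Vfun (X t w) xs + (C0 + 1 - c0)) + K1 * N1 w + K2 * N2 w.
  move=> w; rewrite /Vfun !enorm2; have := Hpt w; lra.
have := int_comb mA mh mN1 mN2 h0 N10 N20 K10 K20 s20 f0 (I1 A FA) (I2 A FA) Hpt'.
move/le_trans; apply.
rewrite le_eqVlt; apply/orP; left; apply/eqP.
by apply: eq_integral => w _; rewrite -addrA.
Qed.

Lemma noise_step (R : realType) d (q2 C2 : R) : 0 < q2 -> q2 < 1 -> 0 <= C2 ->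
  exists c0 C0 K0 : R, [/\ 0 < c0, c0 < 1, 0 <= C0, 0 <= K0 &
    forall (z e : 'rV[R]_d) (n : R), dotv z z <= q2 * n + C2 ->
      dotv (z + e) (z + e) <= c0 * n + C0 + K0 * dotv e e].
Proof.
move=> q0 q1 C0.
pose s := (1 - q2) / 2.
have s0 : 0 < s by rewrite /s; lra.
have si0 : 0 < s^-1 by rewrite invr_gt0.
exists ((1 + s) * q2), ((1 + s) * C2), (1 + s^-1); split.
- by apply: mulr_gt0 => //; lra.
- have -> : (1 + s) * q2 = q2 + q2 * (1 - q2) / 2 by rewrite /s; field.
  have hq : 0 < 1 - q2 by lra.
  have : q2 * (1 - q2) < 1 - q2 by rewrite -[X in _ < X]mul1r ltr_pM2r.
  lra.
- by apply: mulr_ge0 => //; lra.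
- lra.
move=> z e n hz.
have := @n2D_le _ _ s z e s0.
have : (1 + s) * dotv z z <= (1 + s) * (q2 * n + C2) by apply: ler_wpM2l => //; lra.
have -> : (1 + s) * (q2 * n + C2) = (1 + s) * q2 * n + (1 + s) * C2 by ring.
lra.
Qed.
Unset Implicit Arguments.
Theorem corollary1
  (R : realType) (d : nat) (dT : measure_display) (T : measurableType dT)
  (P : probability T R)
  (F : 'rV[R]_d -> 'rV[R]_d) (Rb : R) (xR x0 : 'rV[R]_d)
  (lam mu sigma : R)
  (Fl : nat -> set (set T)) (X : nat -> T -> 'rV[R]_d)
  (U : nat -> T -> 'rV[R]_d -> 'rV[R]_d)
  (Hh : nat -> set (set T)) (Xh : nat -> T -> 'rV[R]_d)
  (Uh : nat -> T -> 'rV[R]_d -> 'rV[R]_d)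
  (gamma alpha Gc L : R) :
  (* F Borel measurable (implicit in the paper) *)
  borel_fun F ->
  (* X* nonempty, containing a point of norm <= R *)
  F xR = 0 -> enorm xR <= Rb ->
  (* the coercivity-type condition at some x0 in X* *)
  F x0 = 0 -> 0 <= lam -> 0 < mu ->
  (forall x, dotv (F x) (x - x0) >= mu * enorm (x - x0) ^+ 2 - lam) ->
  (* stochastic oracle *)
  0 < sigma ->
  filtration Fl ->
  (forall t, meas_wrt (Fl t) (X t)) ->
  (forall t, oracle P (Fl t) (Fl t.+1) sigma (U t)) ->
  (* (i) SGDA  or  (ii) SEG *)
  ( ( (forall t w, X t.+1 w = X t w - gamma *: (F (X t w) + U t w (X t w))) /\
      (forall x, enorm (F x) <= Gc * (1 + enorm x)) /\
      0 < gamma /\ gamma < mu / Gc ^+ 2 )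
    \/
    ( (forall t, sub_sigma (Hh t)) /\
      (forall t, Fl t `<=` Hh t /\ Hh t `<=` Fl t.+1) /\
      (forall t, meas_wrt (Hh t) (Xh t)) /\
      (forall t, oracle P (Hh t) (Fl t.+1) sigma (Uh t)) /\
      (forall t w, Xh t w = X t w - gamma *: (F (X t w) + U t w (X t w))) /\
      (forall t w, X t.+1 w =
          X t w - (alpha * gamma) *: (F (Xh t w) + Uh t w (Xh t w))) /\
      0 <= L /\ (forall x y, enorm (F x - F y) <= L * enorm (x - y)) /\
      0 < gamma /\ gamma < 1 / (2 * mu + Num.sqrt 3 * L) /\
      0 < alpha /\ alpha < 1 ) ) ->
  forall xs : 'rV[R]_d, F xs = 0 ->
  exists c1 c2 : R, [/\ 0 < c1, c1 < 1, 0 < c2 &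
    forall t : nat,
      cond_le P (Fl t) (fun w => Vfun (X t.+1 w) xs)
                       (fun w => c1 * Vfun (X t w) xs + c2)].
Proof.
move=> HF FxR nxR Fx0 l0 m0 Hco s0 HFl HX HU Halg xs Fxs.
have [HFl1 HFl2] := HFl.
case: Halg => [[HX1 [HGc [g0 gmu]]] | [HH1 [HH2 [HXh [HUh [HXhd [HX1 [L0 [HL [g0 [gden [a0 a1]]]]]]]]]]]].
- have [q [C [q0 q1 C0 Hg]]] := det_sgda l0 m0 Hco HGc g0 gmu.
  have [q2 [C2 [q20 q21 C20 Hg2]]] :=
    shift_lem (g := fun x => x - gamma *: F x) xs q0 q1 C0 Hg.
  have [c0 [C0' [K0 [c00 c01 C0'0 K00 Hn]]]] := noise_step d q20 q21 C20.
  have Kg : 0 <= K0 * gamma ^+ 2 by apply: mulr_ge0 => //; exact: sqr_ge0.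
  have K20 : (0 : R) <= 0 by [].
  apply: (finish (K1 := K0 * gamma ^+ 2) (K2 := 0) HFl HX c00 c01 C0'0 Kg K20).
  move=> t.
  have [mU _ _ IU] := HU t (X t) (HX t).
  exists (fun w => enorm (U t w (X t w)) ^+ 2), (fun w => enorm (U t w (X t w)) ^+ 2).
  have mN := meas_n2' (HFl1 t.+1).2 mU.
  do 6 (split; first by (try exact: mN) || (try by move=> w; exact: sqr_ge0) || (try exact: IU)).
  move=> w.
  have e : X t.+1 w - xs = (X t w - gamma *: F (X t w) - xs) + (- (gamma *: U t w (X t w))).
    by rewrite HX1; apply/rowP => i; rewrite !mxE; ring.
  rewrite e; apply: le_trans (Hn _ _ _ (Hg2 (X t w))) _.
  by rewrite n2N n2Z !enorm2 mul0r addr0 mulrA.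
- have [q [C [q0 q1 C0 Hg]]] := det_seg l0 m0 Hco L0 HL g0 gden a0 a1.
  have [q2 [C2 [q20 q21 C20 Hg2]]] :=
    shift_lem (g := fun x => x - (alpha * gamma) *: F (x - gamma *: F x)) xs q0 q1 C0 Hg.
  have [c0 [C0' [K0 [c00 c01 C0'0 K00 Hn]]]] := noise_step d q20 q21 C20.
  have A20 : 0 <= (alpha * gamma) ^+ 2 by exact: sqr_ge0.
  have K1g : 0 <= K0 * (2 * (alpha * gamma) ^+ 2 * (L ^+ 2 * gamma ^+ 2)).
    apply: mulr_ge0 => //; apply: mulr_ge0; first by apply: mulr_ge0.
    by apply: mulr_ge0; exact: sqr_ge0.
  have K2g : 0 <= K0 * (2 * (alpha * gamma) ^+ 2) by apply: mulr_ge0 => //; apply: mulr_ge0.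
  apply: (finish HFl HX c00 c01 C0'0 K1g K2g).
  move=> t.
  have [mU _ _ IU] := HU t (X t) (HX t).
  have [mUh _ _ IUh] := HUh t (Xh t) (HXh t).
  exists (fun w => enorm (U t w (X t w)) ^+ 2), (fun w => enorm (Uh t w (Xh t w)) ^+ 2).
  split; first exact: meas_n2' (HFl1 t.+1).2 mU.
  split; first exact: meas_n2' (HFl1 t.+1).2 mUh.
  split; first by move=> w; exact: sqr_ge0.
  split; first by move=> w; exact: sqr_ge0.
  split; first exact: IU.
  split; first by move=> A FA; apply: IUh; exact: (HH2 t).1.
  move=> w.
  set x := X t w; set xh := x - gamma *: F x.
  have e : X t.+1 w - xs = (x - (alpha * gamma) *: F xh - xs) +
      (- ((alpha * gamma) *: ((F (Xh t w) - F xh) + Uh t w (Xh t w)))).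
    by rewrite HX1; apply/rowP => i; rewrite !mxE; ring.
  rewrite e; apply: le_trans (Hn _ _ _ (Hg2 x)) _.
  rewrite n2N n2Z.
  have e2 : Xh t w - xh = - (gamma *: U t w x).
    by rewrite HXhd; apply/rowP => i; rewrite !mxE; ring.
  have h1 : dotv (F (Xh t w) - F xh) (F (Xh t w) - F xh) <= L ^+ 2 * (gamma ^+ 2 * enorm (U t w x) ^+ 2).
    have -> : gamma ^+ 2 * enorm (U t w x) ^+ 2 = enorm (Xh t w - xh) ^+ 2.
      by rewrite (enorm2 (Xh t w - xh)) e2 n2N n2Z enorm2.
    rewrite -exprMn -enorm2.
    by rewrite !expr2; apply: ler_pM; rewrite ?enorm_ge0 ?HL.
  have h2 := n2D_le2 (F (Xh t w) - F xh) (Uh t w (Xh t w)).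
  rewrite -(enorm2 (Uh t w (Xh t w))) in h2.
  set a := dotv (F (Xh t w) - F xh) (F (Xh t w) - F xh) in h1 h2.
  set b := enorm (Uh t w (Xh t w)) ^+ 2 in h2 *.
  set N1 := enorm (U t w x) ^+ 2 in h1 *.
  set s := dotv _ _ in h2 *.
  have h3 : (alpha * gamma) ^+ 2 * s <= (alpha * gamma) ^+ 2 * (2 * a + 2 * b) by apply: ler_wpM2l.
  have h4 : (alpha * gamma) ^+ 2 * (2 * a) <= (alpha * gamma) ^+ 2 * (2 * (L ^+ 2 * (gamma ^+ 2 * N1))).
    by apply: ler_wpM2l => //; lra.
  have h5 : K0 * ((alpha * gamma) ^+ 2 * s) <= K0 * ((alpha * gamma) ^+ 2 * (2 * (L ^+ 2 * (gamma ^+ 2 * N1))) + (alpha * gamma) ^+ 2 * (2 * b)).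
    by apply: ler_wpM2l => //; lra.
  have e5 : K0 * ((alpha * gamma) ^+ 2 * (2 * (L ^+ 2 * (gamma ^+ 2 * N1))) + (alpha * gamma) ^+ 2 * (2 * b))
     = K0 * (2 * (alpha * gamma) ^+ 2 * (L ^+ 2 * gamma ^+ 2)) * N1 + K0 * (2 * (alpha * gamma) ^+ 2) * b by ring.
  lra.
Qed.
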